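(* For integers $k\ge1$, $1\le j\le k$, and $x\in\mathbb R$, \[ \sum_{i=0}^{k-1}x^i\,(2k-j)_{k-i}\,\frac{(k-1+i)!}{(k-1-i)!\,i!}=\frac{(j-1)!\,(2k-j)!}{(k-1)!}\sum_{\ell=0}^{j-1}\binom{k-1}{\ell}\binom{k-1}{j-1-\ell}x^\ell(1+x)^{k-1-\ell}, \] where $(n)_r=n(n-1)\cdots(n-r+1)$ denotes the falling factorial, $(n)_0=1$. *)

(* Defs.v *)
From HB Require Import structures.
From mathcomp Require Import all_boot all_order all_algebra.
Set Implicit Arguments. Unset Strict Implicit. Unset Printing Implicit Defensive.

(* Main.v *)
Require Import Defs.
From Stdlib Require Import Arith Lia.
From mathcomp Require Import all_boot all_order all_algebra.
Import Order.TTheory GRing.Theory Num.Theory.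
Local Open Scope ring_scope.

Lemma binC n i l : (l <= i -> i <= n -> 'C(n,l)*'C(n-l,i-l) = 'C(n,i)*'C(i,l))%N.
Proof.
move=> li iN.
have P : (0 < l`! * (i-l)`! * (n-i)`!)%N by rewrite !muln_gt0 !fact_gt0.
apply/eqP; rewrite -(eqn_pmul2r P); apply/eqP.
have e : (n - l - (i - l) = n - i)%N.
  by rewrite subnBA // subnK // (leq_trans li iN).
transitivity ('C(n,l) * l`! * ('C(n-l,i-l) * ((i-l)`! * (n-l-(i-l))`!)))%N.
  rewrite e -!multE; match goal with |- ?a = ?b => change (@eq nat a b) end; ring.
rewrite (bin_fact (leq_sub2r l iN)) -mulnA bin_fact ?(leq_trans li iN) //.
transitivity ('C(n,i) * ('C(i,l) * (l`! * (i-l)`!)) * (n-i)`!)%N.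
  by rewrite bin_fact // -mulnA bin_fact.
rewrite -!multE; match goal with |- ?a = ?b => change (@eq nat a b) end; ring.
Qed.
Lemma L1 (R : realFieldType) (x : R) n l : (l <= n)%N ->
  x ^+ l * (1 + x) ^+ (n - l) =
  \sum_(i < n.+1) x ^+ i * (((l <= i)%N * 'C(n - l, i - l))%N)%:R.
Proof.
move=> ln.
rewrite addrC exprD1n big_distrr /= -(big_mkord xpredT (fun i => x ^+ i * (((l <= i)%N * 'C(n - l, i - l))%N)%:R)).
rewrite (@big_cat_nat _ _ _ l 0 n.+1) ?(leq_trans ln) //= [X in _ = X + _]big1_seq ?add0r; last first.
  move=> i; rewrite mem_index_iota /= => il.
  by rewrite leqNgt il mul0n mulr0.
rewrite -[in X in _ = X](add0n l) big_addn subSn // big_mkord.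
apply: eq_bigr => t _.
by rewrite leq_addl mul1n addnK exprD add0n mulr_natr mulrnAr (mulrC (x ^+ t)).
Qed.
Lemma natid n m i : (m <= n -> i <= n ->
  (2 * n.+1 - m.+1) ^_ (n.+1 - i) * (n + i)`! * n`! =
  m`! * (2 * n.+1 - m.+1)`! * ((n - i)`! * i`!) * ('C(n, i) * 'C(i + n, m)))%N.
Proof.
move=> mn iN.
set a := (2 * n.+1 - m.+1)%N.
have e : (a - (n.+1 - i) = i + n - m)%N.
  rewrite /a; move/ssrnat.leP: mn; move/ssrnat.leP: iN => *; rewrite -!minusE -!plusE -!multE; lia.
have le1 : (n.+1 - i <= a)%N.
  rewrite /a; apply/ssrnat.leP; move/ssrnat.leP: mn; move/ssrnat.leP: iN => *; rewrite -!minusE -!multE; lia.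
have P : (0 < (i + n - m)`!)%N by rewrite fact_gt0.
apply/eqP; rewrite -(eqn_pmul2r P); apply/eqP.
transitivity (a ^_ (n.+1 - i) * (a - (n.+1 - i))`! * (n + i)`! * n`!)%N.
  rewrite e -!multE. match goal with |- ?a = ?b => change (@eq nat a b) end; ring.
rewrite ffact_fact //.
have mi : (m <= i + n)%N by rewrite (leq_trans mn) // leq_addl.
transitivity (a`! * ('C(n, i) * (i`! * (n - i)`!)) * ('C(i + n, m) * (m`! * (i + n - m)`!)))%N.
  by rewrite !bin_fact // (addnC n i) mulnAC.
rewrite -!multE. match goal with |- ?a = ?b => change (@eq nat a b) end; ring.
Qed.

Lemma Ssum n m i : (i <= n ->
  \sum_(l < m.+1) 'C(n, l) * 'C(n, m - l) * ((l <= i) * 'C(n - l, i - l))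
  = 'C(n, i) * 'C(i + n, m))%N.
Proof.
move=> iN; rewrite -binomial.Vandermonde big_distrr /=; apply: eq_bigr => l _.
case: (leqP l i) => li.
  by rewrite mul1n mulnAC binC // -!mulnA.
by rewrite mul0n muln0 (bin_small li) muln0.
Qed.

Theorem mainTheorem10 (R : realFieldType) (k j : nat) (x : R)
  (hk : (1 <= k)%N) (hj1 : (1 <= j)%N) (hjk : (j <= k)%N) :
  \sum_(i < k)
     x ^+ i * (((2 * k - j) ^_ (k - i))%N)%:R
       * (((k - 1 + i)`!)%:R / (((k - 1 - i)`!)%:R * (i`!)%:R))
  = ((j - 1)`!)%:R * ((2 * k - j)`!)%:R / ((k - 1)`!)%:R
      * \sum_(l < j)
          (('C(k - 1, l) * 'C(k - 1, j - 1 - l))%N)%:R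
            * x ^+ l * (1 + x) ^+ (k - 1 - l).
Proof.
case: k hk hjk => // n _; case: j hj1 => // m _ mn.
rewrite !subn1 /=.
under [X in _ = _ * X]eq_bigr => l _.
  rewrite -mulrA L1; last by rewrite -ltnS (leq_trans (ltn_ord l) mn).
  rewrite big_distrr /=.
over.
rewrite exchange_big /= big_distrr /=; apply: eq_bigr => i _.
under eq_bigr => l _ do rewrite mulrCA.
rewrite -big_distrr /=.
under eq_bigr => l _ do rewrite -natrM.
rewrite -natr_sum Ssum; last by rewrite -ltnS.
rewrite -mulrA [RHS]mulrCA; congr (_ * _).
rewrite mulrA -!natrM mulrAC -!natrM.
apply/eqP; rewrite eqr_div ?pnatr_eq0 -?lt0n ?muln_gt0 ?fact_gt0 // -!natrM eqr_nat.
apply/eqP; rewrite natid; [exact: mulnAC | by [] | by rewrite -ltnS].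
Qed.
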